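(* Let $R$ be a left-Noetherian discrete proper normed ring and let $M$ be a Polish $R$-module. Then exactly one of the following holds: (1) $M$ is countable; (2) $\ell^1(S)\sqsubseteq^R M$ for some nonzero quotient ring $S=R/I$ of $R$ (by a proper two-sided ideal $I$, with $S$ given the quotient norm $|r+I|=\min_{s\in r+I}|s|$).
   Context: All rings are unital. A ring is left-Noetherian if every increasing sequence of left ideals stabilizes. A norm on a ring $R$ is a function $|\cdot|\colon R\to[0,\infty)$ such that $(a,b)\mapsto|a-b|$ is a metric and $|rs|\le|r||s|$; it is proper if every closed ball is compact; a proper normed ring is a ring with a proper norm, topologized by this metric. For a Polish ring $R$, a Polish $R$-module is a topological left $R$-module whose topology is Polish. For Polish $R$-modules $M,N$, $M\sqsubseteq^R N$ means there is a continuous $R$-linear injection $M\to N$. For a proper normed ring $S$, $\ell^1(S)=\{(s_k)_{k\in\mathbb N}\in S^{\mathbb N}:\sum_k|s_k|/k!<\infty\}$ with norm $\sum_k|s_k|/k!$; it is a Polish module (over $R$ via the quotient map when $S=R/I$). *)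

(* Defs.v *)
From HB Require Import structures.
From mathcomp Require Import all_boot all_order all_algebra.
From mathcomp Require Import all_classical all_reals all_analysis.
From mathcomp Require Import Rstruct Rstruct_topology.

Set Implicit Arguments.
Unset Strict Implicit.
Unset Printing Implicit Defensive.

Import Order.TTheory GRing.Theory Num.Theory.
Local Open Scope classical_set_scope.
Local Open Scope ring_scope.

Definition real : realType := Rdefinitions.R.

Definition is_metric (T : Type) (d : T -> T -> real) : Prop :=
  [/\ forall x y, 0 <= d x y,
      forall x y, d x y = 0 <-> x = y,
      forall x y, d x y = d y x &
      forall x y z, d x z <= d x y + d y z].

Definition metric_open (T : Type) (d : T -> T -> real) (U : set T) : Prop :=
  forall x, U x -> exists2 e : real, 0 < e & forall y, d x y < e -> U y.

Definition metric_cauchy (T : Type) (d : T -> T -> real) (u : nat -> T) : Prop :=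
  forall e : real, 0 < e ->
    exists N : nat, forall m n, (N <= m)%N -> (N <= n)%N -> d (u m) (u n) < e.

Definition metric_converges (T : Type) (d : T -> T -> real) (u : nat -> T) (x : T) : Prop :=
  forall e : real, 0 < e -> exists N : nat, forall n, (N <= n)%N -> d (u n) x < e.

Definition metric_complete (T : Type) (d : T -> T -> real) : Prop :=
  forall u : nat -> T, metric_cauchy d u -> exists x, metric_converges d u x.

Definition is_topology (T : Type) (op : set (set T)) : Prop :=
  [/\ op setT,
      (forall F : set (set T), F `<=` op -> op (\bigcup_(A in F) A)) &
      (forall U V, op U -> op V -> op (U `&` V))].

Definition compact_in (T : Type) (op : set (set T)) (K : set T) : Prop :=
  forall F : set (set T), F `<=` op -> K `<=` \bigcup_(A in F) A ->
    exists (n : nat) (G : nat -> set T),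
      (forall i, (i < n)%N -> F (G i) /\ op (G i)) /\
      K `<=` \bigcup_(i in [set i | (i < n)%N]) G i.

Definition polish (T : Type) (op : set (set T)) : Prop :=
  [/\ is_topology op,
      (exists D : set T, countable D /\
         forall U, op U -> U !=set0 -> (U `&` D) !=set0) &
      (exists d : T -> T -> real,
         [/\ is_metric d, (forall U, op U <-> metric_open d U) & metric_complete d])].

Section NormedRing.
Variable A : pzRingType.
Implicit Types (nr : A -> real).

Definition is_ring_norm nr : Prop :=
  is_metric (fun a b => nr (a - b)) /\ forall r s, nr (r * s) <= nr r * nr s.

Definition norm_open nr : set (set A) := metric_open (fun a b => nr (a - b)).

Definition discrete_norm nr : Prop := forall U : set A, norm_open nr U.

Definition proper_norm nr : Prop :=
  forall (r : A) (c : real), compact_in (norm_open nr) [set s | nr (r - s) <= c].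

Definition left_ideal (J : set A) : Prop :=
  [/\ J 0, (forall x y, J x -> J y -> J (x - y)) & (forall r x, J x -> J (r * x))].

Definition left_noetherian : Prop :=
  forall J : nat -> set A, (forall n, left_ideal (J n)) ->
    (forall n, J n `<=` J n.+1) ->
    exists N : nat, forall n, (N <= n)%N -> J n = J N.

End NormedRing.

Definition topological_module (A : pzRingType) (nr : A -> real)
    (M : lmodType A) (op : set (set M)) : Prop :=
  [/\ is_topology op,
      (forall (x y : M) W, op W -> W (x + y) ->
         exists U V, [/\ op U, op V, U x, V y &
                      forall x' y', U x' -> V y' -> W (x' + y')]),
      (forall (x : M) W, op W -> W (- x) ->
         exists U, [/\ op U, U x & forall x', U x' -> W (- x')]) &
      (forall (r : A) (x : M) W, op W -> W (r *: x) ->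
         exists U V, [/\ norm_open nr U, op V, U r, V x &
                      forall r' x', U r' -> V x' -> W (r' *: x')])].

Definition polish_module (A : pzRingType) (nr : A -> real)
    (M : lmodType A) (op : set (set M)) : Prop :=
  topological_module nr op /\ polish op.

Definition in_l1 (S : pzRingType) (nS : S -> real) (a : nat -> S) : Prop :=
  cvgn (series (fun k => nS (a k) / (k`!)%:R)).

Definition l1_dist (S : pzRingType) (nS : S -> real) (a b : nat -> S) : real :=
  limn (series (fun k => nS (a k - b k) / (k`!)%:R)).

Definition quotient_norm (A : pzRingType) (nr : A -> real) (S : pzRingType)
    (pi : A -> S) (nS : S -> real) : Prop :=
  forall r : A,
    (exists s, pi s = pi r /\ nS (pi r) = nr s) /\
    (forall s, pi s = pi r -> nS (pi r) <= nr s).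

(* f restricted to l^1(S) is a continuous R-linear injection l^1(S) -> M,
   where R acts on l^1(S) through pi: r.(s_k) = (pi r * s_k). *)
Definition l1_embedding (A : pzRingType) (M : lmodType A) (op : set (set M))
    (S : pzRingType) (pi : A -> S) (nS : S -> real) (f : (nat -> S) -> M) : Prop :=
  [/\ (forall a b, in_l1 nS a -> in_l1 nS b -> f (fun k => a k + b k) = f a + f b),
      (forall (r : A) a, in_l1 nS a -> f (fun k => pi r * a k) = r *: f a),
      (forall a b, in_l1 nS a -> in_l1 nS b -> f a = f b -> a = b) &
      (forall a W, in_l1 nS a -> op W -> W (f a) ->
         exists2 e : real, 0 < e &
           forall b, in_l1 nS b -> l1_dist nS a b < e -> W (f b))].

(* l^1(S) [=^R M for some nonzero quotient ring S = R/I (I proper two-sided,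
   namely I = ker pi) with the quotient norm *)
Definition l1_quotient_embeds (A : pzRingType) (nr : A -> real)
    (M : lmodType A) (op : set (set M)) : Prop :=
  exists (S : nzRingType) (pi : {rmorphism A -> S}) (nS : S -> real)
         (f : (nat -> S) -> M),
    [/\ (forall s : S, exists r : A, pi r = s),
        quotient_norm nr pi nS &
        l1_embedding op pi nS f].

Definition exactly_one (P Q : Prop) : Prop := (P \/ Q) /\ ~ (P /\ Q).

(* Main.v *)
Require Import Defs.
From HB Require Import structures.
From mathcomp Require Import all_boot all_order all_algebra.
From mathcomp Require Import all_classical all_reals all_analysis.
From mathcomp Require Import Rstruct Rstruct_topology.
From mathcomp Require Import generic_quotient ring_quotient.
From mathcomp Require Import lra.

Set Implicit Arguments.
Unset Strict Implicit.
Unset Printing Implicit Defensive.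
Import Order.TTheory GRing.Theory Num.Theory.
Local Open Scope classical_set_scope.
Local Open Scope ring_scope.

Local Open Scope quotient_scope.

Record PIdeal (R : pzRingType) := MkPIdeal {
  pI : set R;
  pI0 : pI 0;
  pIB : forall x y, pI x -> pI y -> pI (x - y);
  pIMl : forall r x, pI x -> pI (r * x);
  pIMr : forall r x, pI x -> pI (x * r);
  pI1 : ~ pI 1 }.

Section RQ.
Variables (R : pzRingType) (J : PIdeal R).
Local Notation I := (pI J).
Let I0 := pI0 J.
Let IB := @pIB _ J.
Let IMl := @pIMl _ J.
Let IMr := @pIMr _ J.
Let I1 := @pI1 _ J.

Definition Ib : {pred R} := fun x => `[< I x >].

Lemma Ib_zmod : zmod_closed Ib.
Proof. split; first by apply/asboolP. by move=> x y /asboolP hx /asboolP hy; apply/asboolP; exact: IB. Qed.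

HB.instance Definition _ := GRing.isZmodClosed.Build R Ib Ib_zmod.

Definition RQ := Quotient.quot Ib.
HB.instance Definition _ := GRing.Zmodule.on RQ.
HB.instance Definition _ : EqQuotient R (Quotient.equiv Ib) RQ := EqQuotient.on RQ.
Definition rqpi (x : R) : RQ := \pi_RQ x.

Definition rqone : RQ := lift_cst RQ 1.
Definition rqmul := lift_op2 RQ *%R.
Canonical rqpi_one_morph := PiConst rqone.

Lemma IbE x : (x \in Ib) = `[< I x >]. Proof. by []. Qed.

Lemma rqpi_mul: {morph \pi_RQ : x y / x * y >-> rqmul x y}.
Proof.
move=> x y; unlock rqmul; apply/eqP; rewrite piE Quotient.equivE.
rewrite -[_ * _](addrNK (x * repr (\pi_RQ y))) -mulrBr.
rewrite -addrA -mulrBl rpredD //.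
  rewrite IbE; apply/asboolP; apply: IMl; apply/asboolP.
  by rewrite -IbE Quotient.idealrBE reprK.
rewrite IbE; apply/asboolP; apply: IMr; apply/asboolP.
by rewrite -IbE Quotient.idealrBE reprK.
Qed.
Canonical rqpi_mul_morph := PiMorph2 rqpi_mul.

Lemma rqmulA: associative rqmul.
Proof. by move=> x y z; rewrite -[x]reprK -[y]reprK -[z]reprK !piE mulrA. Qed.
Lemma rqmul1q: left_id rqone rqmul.
Proof. by move=> x; rewrite -[x]reprK !piE mul1r. Qed.
Lemma rqmulq1: right_id rqone rqmul.
Proof. by move=> x; rewrite -[x]reprK !piE mulr1. Qed.
Lemma rqmulDl: left_distributive rqmul +%R.
Proof.
move=> x y z; rewrite -[x]reprK -[y]reprK -[z]reprK.
by rewrite !piE mulrDl.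
Qed.
Lemma rqmulDr: right_distributive rqmul +%R.
Proof.
move=> x y z; rewrite -[x]reprK -[y]reprK -[z]reprK.
by rewrite !piE mulrDr.
Qed.
Lemma rqone_neq0 : rqone != 0.
Proof. rewrite piE Quotient.equivE subr0 IbE; apply/negP => /asboolP; exact: I1. Qed.

HB.instance Definition _ := GRing.Zmodule_isNzRing.Build RQ
  rqmulA rqmul1q rqmulq1 rqmulDl rqmulDr rqone_neq0.

Lemma rqpi_zmod : zmod_morphism rqpi.
Proof. by move=> x y; rewrite /rqpi !piE. Qed.
Lemma rqpi_monoid : monoid_morphism rqpi.
Proof. by split; move=> *; rewrite /rqpi !piE. Qed.
HB.instance Definition _ := GRing.isZmodMorphism.Build R RQ rqpi rqpi_zmod.
HB.instance Definition _ := GRing.isMonoidMorphism.Build R RQ rqpi rqpi_monoid.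

Lemma rqpi_surj (s : RQ) : exists r, rqpi r = s.
Proof. by exists (repr s); rewrite /rqpi reprK. Qed.

Lemma rqpi_eq u v : rqpi u = rqpi v <-> I (u - v).
Proof.
split.
  by move=> /eqP; rewrite /rqpi -Quotient.idealrBE IbE => /asboolP.
by move=> h; apply/eqP; rewrite /rqpi -Quotient.idealrBE IbE; apply/asboolP.
Qed.
End RQ.


Local Close Scope quotient_scope.


Section Metric.
Variables (R : pzRingType) (nr : R -> real) (M : lmodType R) (op : set (set M)).
Variable d : M -> M -> real.
Hypothesis Hd : is_metric d.
Hypothesis Hop : forall U, op U <-> metric_open d U.
Hypothesis Htm : topological_module nr op.

Lemma d_ge0 x y : 0 <= d x y. Proof. by case: Hd. Qed.
Lemma dxx x : d x x = 0. Proof. case: Hd => _ h _ _; exact: (proj2 (h x x) erefl). Qed.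
Lemma d_eq0 x y : d x y = 0 -> x = y. Proof. case: Hd => _ h _ _; exact: (proj1 (h x y)). Qed.
Lemma dC x y : d x y = d y x. Proof. by case: Hd. Qed.
Lemma d_tri x y z : d x z <= d x y + d y z. Proof. by case: Hd. Qed.

Lemma ball_open x e : op [set y | d x y < e].
Proof.
apply/Hop => y /= hy; exists (e - d x y); first by rewrite subr_gt0.
move=> z hz; apply: (le_lt_trans (d_tri x y z)); by rewrite -ltrBrDl.
Qed.

Lemma open_ball U x : op U -> U x -> exists2 e : real, 0 < e & forall y, d x y < e -> U y.
Proof. by move=> /Hop h /h. Qed.

Lemma aff_cont (p : M) (r : R) (y : M) (e : real) : 0 < e ->
  exists2 del : real, 0 < del & forall w, d y w < del -> d (p + r *: y) (p + r *: w) < e.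
Proof.
move=> e0; case: Htm => _ hadd _ hsc.
have [U [V [oU oV Up Vry hUV]]] := hadd p (r *: y) _ (ball_open (p + r *: y) e)
  (ltac:(by rewrite /= dxx)).
have [eta eta0 heta] := open_ball oV Vry.
have [U' [V' [oU' oV' U'r V'y hUV']]] := hsc r y _ (ball_open (r *: y) eta)
  (ltac:(by rewrite /= dxx)).
have [del del0 hdel] := open_ball oV' V'y.
exists del => // w /hdel V'w.
exact: (hUV _ _ Up (heta _ (hUV' _ _ U'r V'w))).
Qed.

Lemma aff_closed (p : M) (r : R) (y : M) :
  (forall del : real, 0 < del -> exists w, d y w < del /\ p + r *: w = 0) ->
  p + r *: y = 0.
Proof.
move=> h; apply: contrapT => hne.
have e0 : 0 < d 0 (p + r *: y).
  rewrite lt0r d_ge0 andbT; apply/eqP => /d_eq0 h0; apply: hne; by rewrite -h0.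
have [del del0 hdel] := aff_cont p r y e0.
have [w [hw hw0]] := h _ del0.
have := hdel _ hw; rewrite hw0 dC.
by rewrite ltxx.
Qed.

Lemma open_add (W : set M) x : op W -> W x ->
  exists2 rho : real, 0 < rho & forall u, d 0 u < rho -> W (x + u).
Proof.
move=> oW Wx; have [eta eta0 heta] := open_ball oW Wx.
have [del del0 hdel] := aff_cont x 1 0 eta0.
exists del => // u /hdel; rewrite scaler0 addr0 scale1r; exact: heta.
Qed.

Definition avoidable (N F : set M) := forall z rho, N z -> 0 < rho ->
  exists y rho', [/\ N y, d z y < rho, 0 < rho' & forall w, N w -> d y w < rho' -> ~ F w].

Definition mclosed (N : set M) := forall y,
  (forall del : real, 0 < del -> exists w, N w /\ d y w < del) -> N y.

Lemma conv_le (u : nat -> M) z y (b : real) m :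
  metric_converges d u z -> (forall n, (m <= n)%N -> d y (u n) <= b) -> d y z <= b.
Proof.
move=> hc hb; apply/ler_addgt0Pr => e e0.
have [n hn] := hc e e0.
have := d_tri y (u (maxn m n)) z.
have := hb (maxn m n) (leq_maxl _ _).
have := hn (maxn m n) (leq_maxr _ _).
lra.
Qed.

Hypothesis Hcomp : metric_complete d.

Lemma baire (N : set M) (F : nat -> set M) : mclosed N ->
  (forall i, avoidable N (F i)) ->
  forall y0 rho0, N y0 -> 0 < rho0 -> exists z, [/\ N z, d y0 z < rho0 & forall i, ~ F i z].
Proof.
move=> Ncl hF y0 rho0 Ny0 r0.
have step : forall it : nat * (M * real), exists u : M * real,
    N it.2.1 -> 0 < it.2.2 -> [/\ N u.1, d it.2.1 u.1 <= it.2.2/2, 0 < u.2, u.2 <= it.2.2/2 &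
     forall w, N w -> d u.1 w <= u.2 -> ~ F it.1 w].
  move=> [i [y rho]] /=.
  case: (pselect (N y /\ 0 < rho)) => [[Ny rp]|h]; last first.
    by exists (y, rho) => a b; exfalso; apply: h.
  have [y' [rho' [Ny' dy rp' hy']]] := hF i y (rho/2) Ny (ltac:(lra)).
  exists (y', Num.min rho' rho / 2) => _ _ /=; split => //.
  - lra.
  - have : 0 < Num.min rho' rho by rewrite lt_min rp rp'.
    lra.
  - have : Num.min rho' rho <= rho by rewrite ge_min lexx orbT.
    lra.
  - move=> w Nw hw; apply: hy' => //.
    have : Num.min rho' rho <= rho' by rewrite ge_min lexx.
    have : 0 < Num.min rho' rho by rewrite lt_min rp rp'.
    lra.
have [g hg] := choice step.
pose s := fix s n := match n with 0%N => (y0, rho0/2) | n'.+1 => g (n', s n') end.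
have hinv : forall n, N (s n).1 /\ 0 < (s n).2.
  elim=> [|n [h1 h2]] /=; first by split => //; lra.
  by have [] := hg (n, s n) h1 h2.
have hs : forall n, [/\ d (s n).1 (s n.+1).1 <= (s n).2/2, (s n.+1).2 <= (s n).2/2 &
     forall w, N w -> d (s n.+1).1 w <= (s n.+1).2 -> ~ F n w].
  move=> n; have [h1 h2] := hinv n.
  by have [] := hg (n, s n) h1 h2.
have hball : forall k n, d (s n).1 (s (n + k)%N).1 <= (s n).2.
  elim=> [|k IH] n; first by rewrite addn0 dxx; have [] := hinv n; lra.
  rewrite addnS -addSn.
  have := d_tri (s n).1 (s n.+1).1 (s (n.+1 + k)).1.
  have := IH n.+1.
  have [] := hs n.
  lra.
have hdec : forall n, (s n).2 * n.+1%:R <= rho0.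
  elim=> [|n IH] /=; first by lra.
  have [_ h2 _] := hs n.
  have [_ p1] := hinv n.
  rewrite -[n.+2]addn1 natrD.
  have : (s n.+1).2 * (n.+1%:R + 1) <= (s n).2 / 2 * (n.+1%:R + 1).
    apply: ler_wpM2r => //; rewrite addr_ge0 //.
  have : (1 : real) <= n.+1%:R by rewrite ler1n.
  nra.
have hcauchy : metric_cauchy d (fun n => (s n).1).
  move=> e e0.
  have [n hn] : exists n : nat, 2 * rho0 / e < n%:R.
    exists (Num.Def.archi_bound (2 * rho0 / e)); apply: archi_boundP.
    by apply: divr_ge0 => //; lra.
  exists n => i j hi hj.
  have h1 := hball (i - n)%N n; rewrite subnKC // in h1.
  have h2 := hball (j - n)%N n; rewrite subnKC // in h2.
  have h3 := d_tri (s i).1 (s n).1 (s j).1.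
  rewrite dC in h1.
  have h4 := hdec n.
  have : (s n).2 < e / 2.
    rewrite ltr_pdivrMr // in hn.
    have : (s n).2 * n%:R <= rho0.
      apply: le_trans h4; apply: ler_wpM2l; first by have [] := hinv n; lra.
      by rewrite ler_nat.
    have [_ p] := hinv n.
    nra.
  lra.
have [z hz] := Hcomp hcauchy.
have hzb : forall n, d (s n).1 z <= (s n).2.
  move=> n; apply: (conv_le hz (m := n)) => k hk.
  by have := hball (k - n)%N n; rewrite subnKC.
exists z; split.
- apply: Ncl => del del0.
  have [n hn] := hz del del0.
  by exists (s n).1; split; [have [] := hinv n | rewrite dC; apply: hn].
- have := hzb 0%N; simpl; lra.
- move=> i; have [_ _ h] := hs i.
  apply: h; last exact: hzb.
  apply: Ncl => del del0.
  have [n hn] := hz del del0.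
  by exists (s n).1; split; [have [] := hinv n | rewrite dC; apply: hn].
Qed.
End Metric.


Section RingNorm.
Variables (R : pzRingType) (nr : R -> real).
Hypothesis Hnorm : is_ring_norm nr.
Hypothesis Hdisc : discrete_norm nr.
Hypothesis Hprop : proper_norm nr.

Lemma nr_ge0 x : 0 <= nr x.
Proof. case: Hnorm => [[h _ _ _] _]; by have := h x 0; rewrite subr0. Qed.
Lemma nr0 : nr 0 = 0.
Proof. case: Hnorm => [[_ h _ _] _]; by have := proj2 (h 0 0) erefl; rewrite subr0. Qed.
Lemma nr_eq0 x : nr x = 0 -> x = 0.
Proof. case: Hnorm => [[_ h _ _] _] hx; apply: (proj1 (h x 0)); by rewrite subr0. Qed.
Lemma nrN x : nr (- x) = nr x.
Proof. case: Hnorm => [[_ _ h _] _]; by have := h 0 x; rewrite sub0r subr0. Qed.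
Lemma nrD x y : nr (x + y) <= nr x + nr y.
Proof.
case: Hnorm => [[_ _ _ h] _]; have := h x 0 (- y).
by rewrite !opprK subr0 add0r.
Qed.
Lemma nrM x y : nr (x * y) <= nr x * nr y.
Proof. by case: Hnorm. Qed.

Lemma disc_min : exists2 th : real, 0 < th & forall r, nr r < th -> r = 0.
Proof.
have [th th0 hth] := @Hdisc [set 0] 0 erefl.
exists th => // r hr; apply: hth; by rewrite sub0r nrN.
Qed.

Lemma ball_list (c : real) : exists L : seq R, forall r, nr r <= c -> r \in L.
Proof.
have := @Hprop 0 c; rewrite /compact_in => h.
have [n [G [hG hK]]] := h [set A | exists y, A = [set y]]
  (fun A _ => @Hdisc A) (fun r hr => ex_intro2 _ _ [set r] (ex_intro _ r erefl) erefl).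
pose pick i := if pselect (exists y, G i = [set y]) is left e then projT1 (cid e) else 0.
exists [seq pick i | i <- iota 0 n] => r hr.
have [i hi Gir] := hK r (ltac:(by rewrite /= sub0r nrN)).
have [FGi _] := hG i hi.
apply/mapP; exists i; first by rewrite mem_iota add0n.
rewrite /pick; case: pselect => [e|]; last by move=> nh; exfalso; apply: nh.
have := projT2 (cid e); set y := projT1 _ => hy.
by move: Gir; rewrite hy.
Qed.

Lemma enum_R : exists e : nat -> R, forall r, exists k, e k = r.
Proof.
have [L hL] := choice (fun n : nat => ball_list n%:R).
pose e k := if (@unpickle (nat * nat)%type k) is Some p then nth 0 (L p.1) p.2 else 0.
exists e => r.
have [n hn] : exists n : nat, nr r <= n%:R.
  exists (Num.Def.archi_bound (nr r)); apply/ltW/archi_boundP/nr_ge0.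
exists (pickle (n, index r (L n))); rewrite /e pickleK /=.
by apply: nth_index; apply: hL.
Qed.
End RingNorm.


Definition Ann (R : pzRingType) (M : lmodType R) (J : set R) : set M :=
  [set x | forall t, J t -> t *: x = 0].
Arguments Ann {R} M J.
Definition tideal (R : pzRingType) (J : set R) :=
  left_ideal J /\ (forall x r, J x -> J (x * r)).

Section MaxIdeal.
Variables (R : pzRingType) (M : lmodType R).
Hypothesis Hnoeth : left_noetherian R.
Hypothesis Hunc : ~ countable [set: M].

Lemma tideal0 : tideal [set (0 : R)].
Proof.
split; first split => //.
- by move=> x y -> ->; rewrite subr0.
- by move=> r x ->; rewrite mulr0.
- by move=> x r ->; rewrite mul0r.
Qed.

Lemma max_ideal : exists I : set R, [/\ tideal I, ~ countable (Ann M I) &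
  forall J, tideal J -> ~ countable (Ann M J) -> I `<=` J -> J `<=` I].
Proof.
apply: contrapT => hno.
have step : forall J : set R, exists J' : set R, tideal J -> ~ countable (Ann M J) ->
    [/\ tideal J', ~ countable (Ann M J'), J `<=` J' & ~ J' `<=` J].
  move=> J; case: (pselect (tideal J /\ ~ countable (Ann M J))) => [[h1 h2]|h]; last first.
    by exists J => a b; exfalso; apply: h.
  apply: contrapT => hne; apply: hno; exists J; split => // J' t' u' s'.
  apply: contrapT => ns; apply: hne; exists J' => _ _; by split.
have [g hg] := choice step.
pose C := fix C n := if n is n'.+1 then g (C n') else [set (0 : R)].
have hC : forall n, tideal (C n) /\ ~ countable (Ann M (C n)).
  elim=> [|n [h1 h2]]; last by have [] := hg (C n) h1 h2.
  split; first exact: tideal0.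
  move=> hc; apply: Hunc; apply: sub_countable hc; apply: subset_card_le.
  by move=> x _ t /= ->; rewrite scale0r.
have [N0 hN0] := @Hnoeth C (fun n => (hC n).1.1)
  (fun n => let: conj h1 h2 := hC n in (let: And4 _ _ h _ := hg (C n) h1 h2 in h)).
have := hN0 N0.+1 (leqnSn _) => /= e.
have [h1 h2] := hC N0; have [_ _ _ h] := hg (C N0) h1 h2.
by apply: h; rewrite e.
Qed.
End MaxIdeal.

Lemma inv_small (del : real) : 0 < del -> exists n : nat, (n.+1%:R)^-1 < del.
Proof.
move=> d0; exists (Num.Def.archi_bound (del^-1)).
have hp : 0 < del^-1 by rewrite invr_gt0.
have h := archi_boundP (ltW hp).
set n := Num.Def.archi_bound _ in h *.
have hn : del^-1 < n.+1%:R by apply: (lt_trans h); rewrite ltr_nat.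
rewrite -(invrK del) ltf_pV2 ?posrE ?invr_gt0 //.
Qed.

Section MaxSec.
Variables (R : pzRingType) (nr : R -> real) (M : lmodType R) (op : set (set M)).
Variable d : M -> M -> real.
Hypothesis Hd : is_metric d.
Hypothesis Hop : forall U, op U <-> metric_open d U.
Hypothesis Htm : topological_module nr op.
Hypothesis Hcomp : metric_complete d.
Hypothesis Hnoeth : left_noetherian R.
Variable D : set M.
Hypothesis HDc : countable D.
Hypothesis HDd : forall U, op U -> U !=set0 -> (U `&` D) !=set0.
Variable I : set R.
Hypothesis HI : tideal I.
Hypothesis HIu : ~ countable (Ann M I).
Hypothesis HImax : forall J, tideal J -> ~ countable (Ann M J) -> I `<=` J -> J `<=` I.

Local Notation N := (Ann M I).

Lemma N0 : N 0. Proof. by move=> t _; rewrite scaler0. Qed.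
Lemma ND x y : N x -> N y -> N (x + y).
Proof. by move=> hx hy t ht; rewrite scalerDr hx // hy // addr0. Qed.
Lemma NZ r x : N x -> N (r *: x).
Proof. move=> hx t ht; rewrite scalerA; apply: hx; by case: HI => _ h; apply: h. Qed.
Lemma NB x y : N x -> N y -> N (x - y).
Proof. by move=> hx hy; rewrite -scaleN1r; apply: ND => //; apply: NZ. Qed.

Lemma N_closed : mclosed d N.
Proof.
move=> y hy t It.
have := @aff_closed _ _ _ _ _ Hd Hop Htm 0 t y.
rewrite add0r; apply => del del0.
have [w [Nw dw]] := hy del del0.
by exists w; rewrite add0r; split => //; apply: Nw.
Qed.

Lemma sep_N : exists E : set M, [/\ countable E, E `<=` N &
  forall x, N x -> forall del, 0 < del -> exists2 e, E e & d x e < del].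
Proof.
pose h (yq : M * nat) : M := if pselect (exists w, N w /\ d yq.1 w < (yq.2.+1%:R)^-1)
  is left e then projT1 (cid e) else 0.
have hN : forall yq, N (h yq).
  move=> yq; rewrite /h; case: pselect => [e|_]; last exact: N0.
  by have [] := projT2 (cid e).
have hd : forall yq, (exists w, N w /\ d yq.1 w < (yq.2.+1%:R)^-1) ->
    d yq.1 (h yq) < (yq.2.+1%:R)^-1.
  move=> yq ex; rewrite /h; case: pselect => [e|//].
  by have [] := projT2 (cid e).
exists (h @` (D `*` setT)); split.
- apply: sub_countable (card_image_le _ _) _.
  by apply: countableX => //; apply: countableP.
- by move=> _ [yq _ <-]; apply: hN.
- move=> x Nx del del0.
  have [q hq] := inv_small (ltac:(lra) : 0 < del / 2).
  have hb : [set y | d x y < (q.+1%:R)^-1] !=set0.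
    exists x => /=; by rewrite (dxx Hd) invr_gt0 ltr0n.
  have [y [/= dxy Dy]] := HDd (ball_open Hd Hop x (q.+1%:R)^-1) hb.
  exists (h (y, q)); first by exists (y, q).
  have hyx : d y x < (q.+1%:R)^-1 by rewrite (dC Hd).
  have := hd (y, q) (ex_intro _ x (conj Nx hyx)).
  have := d_tri Hd x y (h (y, q)).
  move: (h (y, q)) => hyq /=.
  move: hq dxy; move: (q.+1%:R^-1) => t; lra.
Qed.

Lemma cover (K : set M) (rho : real) : 0 < rho ->
  (forall u, N u -> d 0 u < rho -> K u) -> countable K -> countable N.
Proof.
move=> r0 hK cK.
have [E [cE EN dE]] := sep_N.
apply: (@sub_countable _ _ _ ((fun p : M * M => p.1 + p.2) @` (E `*` K))); last first.
  apply: sub_countable (card_image_le _ _) _; exact: countableX.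
apply: subset_card_le => x Nx.
have [del del0 hdel] := aff_cont Hd Hop Htm x (-1) x r0.
have [e Ee dxe] := dE x Nx del del0.
exists (e, x - e); last by rewrite /= addrC subrK.
split => //=; apply: hK; first by apply: NB => //; apply: EN.
have := hdel e dxe; by rewrite !scaleN1r subrr.
Qed.

Lemma ML r : (exists2 rho : real, 0 < rho & forall u, N u -> d 0 u < rho -> r *: u = 0) -> I r.
Proof.
move=> [rho r0 hr].
pose Jn (n : nat) : set R := [set t | forall u, N u -> d 0 u < (n.+1%:R)^-1 -> t *: u = 0].
have Jmono : forall m n, (m <= n)%N -> Jn m `<=` Jn n.
  move=> m n mn t ht u Nu du; apply: ht Nu _; apply: lt_le_trans du _.
  by rewrite lef_pV2 ?posrE ?ltr0n // ler_nat.
have Jl : forall n, left_ideal (Jn n).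
  move=> n; split.
  - by move=> u _ _; rewrite scale0r.
  - by move=> x y hx hy u Nu du; rewrite scalerBl hx // hy // subrr.
  - by move=> a x hx u Nu du; rewrite -scalerA hx // scaler0.
have [N1 hN1] := @Hnoeth Jn Jl (fun n => Jmono n n.+1 (leqnSn n)).
pose J := [set t | exists n, Jn n t].
have JN1 : forall t, J t -> Jn N1 t.
  move=> t [n hn]; case: (leqP n N1) => h; first exact: Jmono h _ hn.
  by rewrite -(hN1 n (ltnW h)).
have tJ : tideal J.
  split; first split.
  - by exists 0%N => u _ _; rewrite scale0r.
  - move=> x y [a ha] [b hb]; exists (maxn a b) => u Nu du.
    have ha' := Jmono _ _ (leq_maxl a b) _ ha.
    have hb' := Jmono _ _ (leq_maxr a b) _ hb.
    by rewrite scalerBl ha' // hb' // subrr.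
  - move=> a x [n hn]; exists n => u Nu du; by rewrite -scalerA hn // scaler0.
  - move=> x a [n hn].
    have hp : 0 < (n.+1%:R : real)^-1 by rewrite invr_gt0 ltr0n.
    have [del del0 hdel] := aff_cont Hd Hop Htm 0 a 0 hp.
    have [m hm] := inv_small del0.
    exists m => u Nu du; rewrite -scalerA; apply: hn; first exact: NZ.
    have := hdel u (lt_trans du hm); by rewrite scaler0 !add0r.
have IJ : I `<=` J by move=> t It; exists 0%N => u Nu _; exact: Nu t It.
have Ju : ~ countable (Ann M J).
  move=> cJ; apply: HIu.
  have hp : 0 < (N1.+1%:R : real)^-1 by rewrite invr_gt0 ltr0n.
  apply: (@cover (Ann M J) _ hp _ cJ).
  move=> u Nu du t Jt; exact: JN1 Jt u Nu du.
apply: (HImax tJ Ju IJ).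
have [n hn] := inv_small r0.
exists n => u Nu du; apply: hr Nu (lt_trans du hn).
Qed.

Lemma NDense p r : ~ I r -> avoidable d N [set w | p + r *: w = 0].
Proof.
move=> nIr z rho Nz r0; apply: contrapT => hno.
have hall : forall y, N y -> d z y < rho -> p + r *: y = 0.
  move=> y Ny dzy; apply: (aff_closed Hd Hop Htm) => del del0.
  apply: contrapT => hne; apply: hno; exists y, del; split => // w Nw dw /= e.
  by apply: hne; exists w.
apply: nIr; apply: ML.
have [del del0 hdel] := aff_cont Hd Hop Htm z 1 0 r0.
exists del => // u Nu du.
have h1 := hall z Nz (ltac:(by rewrite (dxx Hd))).
have hzu : d z (z + u) < rho by have := hdel u du; rewrite !scale1r addr0.
have h2 := hall (z + u) (ND Nz Nu) hzu.
by move: h2; rewrite scalerDr addrA h1 add0r.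
Qed.
End MaxSec.


Definition Pf (R : pzRingType) (M : lmodType R) (c : nat -> R) (X : nat -> M) (n : nat) : M :=
  \sum_(i < n) c i *: X i.
Fixpoint gam (D : nat -> real) n := if n is n'.+1 then Num.min (gam D n') (D n') else 1.
Definition eps (D : nat -> real) n := gam D n / 2 ^+ n.+1.
Definition bnd (R : pzRingType) (nr : R -> real) (c : nat -> R) (b n : nat) :=
  forall i, (i <= n)%N -> nr (c i) <= b%:R * (i`!)%:R.

Lemma Pf_S (R : pzRingType) (M : lmodType R) c (X : nat -> M) n :
  Pf c X n.+1 = Pf c X n + c n *: X n.
Proof. by rewrite /Pf big_ord_recr. Qed.

Lemma gamS D n : gam D n.+1 = Num.min (gam D n) (D n).
Proof. by []. Qed.

Lemma gam_gt0 D n : (forall i, (i < n)%N -> 0 < D i) -> 0 < gam D n.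
Proof.
elim: n => [|n IH] hD; first by [].
rewrite gamS lt_min IH ?hD // => i hi; apply: hD; exact: ltnW.
Qed.

Lemma gam_le1 D n : gam D n <= 1.
Proof.
elim: n => [|n IH]; first by [].
by rewrite gamS ge_min IH.
Qed.

Lemma gam_le D n i : (i < n)%N -> gam D n <= D i.
Proof.
elim: n => [//|n IH] hi; rewrite gamS ge_min.
case: (ltnP i n) => h; first by rewrite IH.
have -> : i = n by apply/eqP; rewrite eqn_leq h -ltnS hi.
by rewrite lexx orbT.
Qed.

Lemma gam_ext D D' n : (forall i, (i < n)%N -> D i = D' i) -> gam D n = gam D' n.
Proof.
elim: n => [//|n IH] h; rewrite !gamS IH ?h // => i hi; apply: h; exact: ltnW.
Qed.

Lemma Pf_ext (R : pzRingType) (M : lmodType R) c (X X' : nat -> M) n :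
  (forall i, (i < n)%N -> X i = X' i) -> Pf c X n = Pf c X' n.
Proof. by move=> h; apply: eq_bigr => i _; rewrite h. Qed.

Lemma avoid_sub (R : pzRingType) (M : lmodType R) (d : M -> M -> real) (N A B : set M) :
  avoidable d N A -> B `<=` A -> avoidable d N B.
Proof.
move=> hA BA z rho Nz r0; have [y [rho' [Ny dy r' h]]] := hA z rho Nz r0.
by exists y, rho'; split => // w Nw dw /BA; apply: h.
Qed.

Section Constr.
Variables (R : pzRingType) (nr : R -> real) (M : lmodType R) (op : set (set M)).
Variable d : M -> M -> real.
Hypothesis Hd : is_metric d.
Hypothesis Hop : forall U, op U <-> metric_open d U.
Hypothesis Htm : topological_module nr op.
Hypothesis Hcomp : metric_complete d.
Hypothesis Hnoeth : left_noetherian R.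
Hypothesis Hnorm : is_ring_norm nr.
Hypothesis Hdisc : discrete_norm nr.
Hypothesis Hprop : proper_norm nr.
Variable D : set M.
Hypothesis HDc : countable D.
Hypothesis HDd : forall U, op U -> U !=set0 -> (U `&` D) !=set0.
Variable I : set R.
Hypothesis HI : tideal I.
Hypothesis HIu : ~ countable (Ann M I).
Hypothesis HImax : forall J, tideal J -> ~ countable (Ann M J) -> I `<=` J -> J `<=` I.

Local Notation N := (Ann M I).

Definition Good n (X : nat -> M) (Dl : nat -> real) (x : M) (del : real) :=
  [/\ N x,
   (forall c, bnd nr c n.+1 n -> d (Pf c X n) (Pf c X n + c n *: x) < eps Dl n),
   (forall c, ~ I (c n) -> Pf c X n + c n *: x <> 0),
   0 < del &
   (forall c, bnd nr c n.+1 n -> (exists2 i, (i <= n)%N & ~ I (c i)) ->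
      del <= d 0 (Pf c X n + c n *: x))].

Definition Indep n (X : nat -> M) :=
  forall c, (exists2 i, (i < n)%N & ~ I (c i)) -> Pf c X n <> 0.

Lemma fin_pref (b : nat -> real) (X : nat -> M) n : exists V : seq M,
  forall c, (forall i, (i < n)%N -> nr (c i) <= b i) -> Pf c X n \in V.
Proof.
elim: n => [|n [V hV]]; first by exists [:: 0] => c _; rewrite /Pf big_ord0 mem_seq1.
have [L hL] := ball_list Hnorm Hdisc Hprop (b n).
exists [seq v + r *: X n | v <- V, r <- L] => c hc.
rewrite Pf_S; apply: allpairs_f; last by apply: hL; apply: hc.
by apply: hV => i hi; apply: hc; apply: ltnW.
Qed.

Lemma fin_nbhd (L : seq (M * R)) (e : real) : 0 < e ->
  exists2 rho : real, 0 < rho & forall x, d 0 x < rho ->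
    forall q, q \in L -> d q.1 (q.1 + q.2 *: x) < e.
Proof.
move=> e0; elim: L => [|q L [rho r0 hrho]]; first by exists 1 => // x _ q; rewrite in_nil.
have [del d0 hdel] := aff_cont Hd Hop Htm q.1 q.2 0 e0.
exists (Num.min rho del); first by rewrite lt_min r0 d0.
move=> x hx q'; rewrite in_cons => /orP [/eqP ->|hq].
- have := hdel x; rewrite scaler0 addr0; apply; apply: lt_le_trans hx _.
  by rewrite ge_min lexx orbT.
- apply: hrho hq; apply: lt_le_trans hx _; by rewrite ge_min lexx.
Qed.

Lemma fin_min (W : seq M) : exists2 del : real, 0 < del &
  forall w, w \in W -> w <> 0 -> del <= d 0 w.
Proof.
elim: W => [|a W [del d0 hdel]]; first by exists 1 => // w; rewrite in_nil.
case: (pselect (a = 0)) => ha.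
  exists del => // w; rewrite in_cons => /orP [/eqP -> //|]; exact: hdel.
have hpos : 0 < d 0 a.
  rewrite lt0r (d_ge0 Hd) andbT; apply/eqP => /(d_eq0 Hd) h; by apply: ha.
exists (Num.min del (d 0 a)); first by rewrite lt_min d0 hpos.
move=> w; rewrite in_cons => /orP [/eqP ->|hw] hw0; first by rewrite ge_min lexx orbT.
by rewrite ge_min hdel.
Qed.

Lemma exist_good n (X : nat -> M) (Dl : nat -> real) :
  (forall i, (i < n)%N -> 0 < Dl i) -> Indep n X ->
  exists x del, Good n X Dl x del.
Proof.
move=> hDl hInd.
have [e he] := enum_R Hnorm Hdisc Hprop.
have [ie hie] := choice he.
have [V hV] := fin_pref (fun i => n.+1%:R * (i`!)%:R) X n.
have [Lb hLb] := ball_list Hnorm Hdisc Hprop (n.+1%:R * (n`!)%:R).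
have epos : 0 < eps Dl n.
  by rewrite /eps divr_gt0 ?exprn_gt0 // gam_gt0.
have [rho r0 hrho] := fin_nbhd [seq (v, r) | v <- V, r <- Lb] epos.
pose F (j : nat) : set M := [set w | N w /\
  (if (unpickle j : option (nat * seq nat)) is Some ks then
     ~ I (e ks.1) /\ Pf (fun i => e (nth 0%N ks.2 i)) X n + e ks.1 *: w = 0 else False)].
have hF : forall j, avoidable d N (F j).
  move=> j; case hj: (unpickle j : option (nat * seq nat)) => [ks|]; last first.
    move=> z r' Nz r'0; exists z, 1; split => //; first by rewrite (dxx Hd).
    by move=> w Nw _ [_]; rewrite hj.
  case: (pselect (I (e ks.1))) => hI.
    move=> z r' Nz r'0; exists z, 1; split => //; first by rewrite (dxx Hd).
    by move=> w Nw _ [_]; rewrite hj; case.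
  apply: avoid_sub (NDense Hd Hop Htm Hnoeth HDc HDd HI HIu HImax
     (Pf (fun i => e (nth 0%N ks.2 i)) X n) hI) _.
  by move=> w [_]; rewrite hj => -[].
have hN0 : N 0 by move=> t _; rewrite scaler0.
have [x [Nx dx hx]] := baire Hd Hcomp (N_closed Hd Hop Htm (I:=I)) hF hN0 r0.
have G1 : forall c, bnd nr c n.+1 n -> d (Pf c X n) (Pf c X n + c n *: x) < eps Dl n.
  move=> c hc; apply: (hrho x dx (Pf c X n, c n)).
  apply: allpairs_f; last by apply: hLb; apply: hc.
  by apply: hV => i hi; apply: hc; apply: ltnW.
have G2 : forall c, ~ I (c n) -> Pf c X n + c n *: x <> 0.
  move=> c hc h0; apply: (hx (pickle (ie (c n), [seq ie (c i) | i <- iota 0 n]))).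
  split => //; rewrite pickleK /=; split; first by rewrite hie.
  rewrite hie -[RHS]h0; congr (_ + _); apply: eq_bigr => i _.
  by rewrite (nth_map 0%N) ?size_iota // nth_iota // hie.
have Ind' : forall c, (exists2 i, (i <= n)%N & ~ I (c i)) -> Pf c X n + c n *: x <> 0.
  move=> c [i hi nI]; case: (pselect (I (c n))) => hIn; last exact: G2.
  have -> : c n *: x = 0 by apply: Nx.
  rewrite addr0; apply: hInd; exists i => //.
  rewrite ltn_neqAle hi andbT; apply/eqP => ein; apply: nI; by rewrite ein.
have [del d0 hdel] := fin_min [seq v + r *: x | v <- V, r <- Lb].
exists x, del; split => // c hc hex; apply: hdel; last exact: Ind'.
apply: allpairs_f; last by apply: hLb; apply: hc.
by apply: hV => i hi; apply: hc; apply: ltnW.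
Qed.

Lemma Good_ext n X X' Dl Dl' x del :
  (forall i, (i < n)%N -> X i = X' i /\ Dl i = Dl' i) ->
  Good n X Dl x del -> Good n X' Dl' x del.
Proof.
move=> h [h1 h2 h3 h4 h5].
have hP : forall c, Pf c X n = Pf c X' n.
  by move=> c; apply: Pf_ext => i hi; have [] := h i hi.
have hE : eps Dl n = eps Dl' n.
  by rewrite /eps (@gam_ext Dl Dl') // => i hi; have [] := h i hi.
split => // c; rewrite -hP -?hE; [exact: h2 | exact: h3 | exact: h5].
Qed.

Lemma seq_exists : exists (x : nat -> M) (dl : nat -> real),
  forall n, Good n x dl (x n) (dl n).
Proof.
have hstep : forall st : nat * ((nat -> M) * (nat -> real)), exists p : M * real,
    (forall i, (i < st.1)%N -> 0 < st.2.2 i) -> Indep st.1 st.2.1 ->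
    Good st.1 st.2.1 st.2.2 p.1 p.2.
  move=> [n [X Dl]] /=.
  case: (pselect ((forall i, (i < n)%N -> 0 < Dl i) /\ Indep n X)) => [[h1 h2]|h].
    by have [x [del hg]] := exist_good h1 h2; exists (x, del).
  by exists (0, 0) => h1 h2; exfalso; apply: h.
have [g hg] := choice hstep.
pose F := fix F n := if n is n'.+1 then
   (fun i => if i == n' then (g (n', F n')).1 else (F n').1 i,
    fun i => if i == n' then (g (n', F n')).2 else (F n').2 i)
  else ((fun _ => 0) : nat -> M, (fun _ => 1) : nat -> real).
pose x i := (F i.+1).1 i; pose dl i := (F i.+1).2 i.
have cons : forall i k, (F (i.+1 + k)%N).1 i = x i /\ (F (i.+1 + k)%N).2 i = dl i.
  move=> i; elim=> [|k IH]; first by rewrite addn0.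
  have hne : (i == i.+1 + k)%N = false.
    by apply/negbTE; rewrite neq_ltn addSn ltnS leq_addr.
  by rewrite addnS /= hne.
have consF : forall n i, (i < n)%N -> (F n).1 i = x i /\ (F n).2 i = dl i.
  by move=> n i hi; have := cons i (n - i.+1)%N; rewrite subnKC.
have xn : forall n, x n = (g (n, F n)).1 /\ dl n = (g (n, F n)).2.
  by move=> n; rewrite /x /dl /= eqxx.
have inv : forall n, (forall i, (i < n)%N -> 0 < (F n).2 i) /\ Indep n (F n).1.
  elim=> [|n [IH1 IH2]].
    by split => // c [i].
  have [Nx G1 G2 dpos G4] := hg (n, F n) IH1 IH2.
  split.
    move=> i hi /=; case: eqP => [_|ne]; first exact: dpos.
    apply: IH1; rewrite ltn_neqAle -ltnS hi andbT; exact/eqP.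
  move=> c [i hi nI].
  have -> : Pf c (F n.+1).1 n.+1 = Pf c (F n).1 n + c n *: (g (n, F n)).1.
    rewrite Pf_S /= eqxx; congr (_ + _); apply: Pf_ext => j hj /=.
    by rewrite ltn_eqF.
  case: (pselect (I (c n))) => hIn; last exact: G2.
  have -> : c n *: (g (n, F n)).1 = 0 by apply: Nx.
  rewrite addr0; apply: IH2; exists i => //.
  rewrite ltn_neqAle -ltnS hi andbT; apply/eqP => ein; apply: nI; by rewrite ein.
exists x, dl => n.
have [h1 h2] := inv n.
have := hg (n, F n) h1 h2; rewrite -(proj1 (xn n)) -(proj2 (xn n)) /=.
by apply: Good_ext => i hi; apply: consF.
Qed.
End Constr.


Lemma pow_small (eta e : real) : 0 <= eta -> 0 < e -> exists n : nat, eta / 2 ^+ n < e.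
Proof.
move=> e0 ep.
have [n h] : exists n : nat, eta / e < n%:R.
  exists (Num.Def.archi_bound (eta / e)).
  by apply: archi_boundP; apply: divr_ge0 => //; exact: ltW.
exists n.
have p2 : (0 : real) < 2 ^+ n by apply: exprn_gt0.
rewrite ltr_pdivrMr //.
rewrite ltr_pdivrMr // in h.
have h2 : (n%:R : real) <= 2 ^+ n.
  rewrite -natrX ler_nat; apply: ltnW; exact: ltn_expl.
have : e * n%:R <= e * 2 ^+ n by rewrite ler_wpM2l // ltW.
move: (2 ^+ n : real) (n%:R : real) h => a b; lra.
Qed.

Lemma pow_mono (eta : real) i j : 0 <= eta -> (i <= j)%N -> eta / 2 ^+ j <= eta / 2 ^+ i.
Proof.
move=> e0 ij; apply: ler_wpM2l => //.
rewrite lef_pV2 ?posrE ?exprn_gt0 //; by rewrite ler_eXn2l // ltr1n.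
Qed.

Lemma term_le_lim (u : nat -> real) : (forall k, 0 <= u k) -> cvgn (series u) ->
  forall k, u k <= limn (series u).
Proof.
move=> u0 hc k.
have hom : {homo series u : n m / (n <= m)%N >-> n <= m}.
  by move=> n m nm; apply: (@nondecreasing_series _ u xpredT 0%N) => // i _ _; apply: u0.
apply: le_trans (nondecreasing_cvgn_le hom hc k.+1).
rewrite seriesSr lerDr /series /=; apply: sumr_ge0 => i _; exact: u0.
Qed.

Section Final.
Variables (R : pzRingType) (nr : R -> real) (M : lmodType R) (op : set (set M)).
Variable d : M -> M -> real.
Hypothesis Hd : is_metric d.
Hypothesis Hop : forall U, op U <-> metric_open d U.
Hypothesis Htm : topological_module nr op.
Hypothesis Hcomp : metric_complete d.
Hypothesis Hnorm : is_ring_norm nr.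
Hypothesis Hdisc : discrete_norm nr.
Hypothesis Hprop : proper_norm nr.
Variable J : PIdeal R.
Local Notation I := (pI J).
Local Notation S := (RQ J).
Local Notation pi := (rqpi J).
Variables (x : nat -> M) (dl : nat -> real).
Hypothesis HG : forall n, Good nr d I n x dl (x n) (dl n).

Lemma list_min (L : seq R) (P : R -> Prop) r0 : r0 \in L -> P r0 ->
  exists r, [/\ r \in L, P r & forall r', r' \in L -> P r' -> nr r <= nr r'].
Proof.
elim: L r0 => [//|a L IH] r0.
case: (pselect (exists2 r', r' \in L & P r')) => [[r' r'L Pr'] _ _|nex].
  have [m [mL Pm hm]] := IH r' r'L Pr'.
  case: (pselect (P a /\ nr a <= nr m)) => [[Pa am]|na].
    exists a; split => //; first by rewrite mem_head.
    move=> r''; rewrite in_cons => /orP [/eqP -> //|hr] Pr; exact: le_trans am (hm _ hr Pr).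
  exists m; split => //; first by rewrite in_cons mL orbT.
  move=> r''; rewrite in_cons => /orP [/eqP ->|hr] Pr; last exact: hm.
  have := nr_ge0 Hnorm m; case: (lerP (nr m) (nr a)) => // h _.
  by exfalso; apply: na; split => //; apply: ltW.
rewrite in_cons => /orP [/eqP ->|hr0] Pr0; last by exfalso; apply: nex; exists r0.
exists a; split => //; first by rewrite mem_head.
move=> r''; rewrite in_cons => /orP [/eqP -> //|hr] Pr; by exfalso; apply: nex; exists r''.
Qed.

Lemma rep_ex (s : S) : exists r, pi r = s /\ forall r', pi r' = s -> nr r <= nr r'.
Proof.
have [r0 h0] := rqpi_surj s.
have [L hL] := ball_list Hnorm Hdisc Hprop (nr r0).
have [m [mL Pm hm]] := list_min (P := fun r => pi r = s) (hL r0 (lexx _)) h0.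
exists m; split => // r' hr'.
case: (lerP (nr r') (nr r0)) => h; first exact: hm (hL _ h) hr'.
apply: le_trans (hm _ (hL r0 (lexx _)) h0) (ltW h).
Qed.

Definition rep (s : S) : R := projT1 (cid (rep_ex s)).
Lemma repP s : pi (rep s) = s. Proof. by have [] := projT2 (cid (rep_ex s)). Qed.
Lemma rep_min s r : pi r = s -> nr (rep s) <= nr r.
Proof. by have [_ h] := projT2 (cid (rep_ex s)); apply: h. Qed.

Definition nS (s : S) : real := nr (rep s).

Lemma qnorm : quotient_norm nr pi nS.
Proof.
move=> r; split; first by exists (rep (pi r)); rewrite repP.
move=> s hs; apply: rep_min; by rewrite hs.
Qed.

Lemma nS_ge0 s : 0 <= nS s. Proof. rewrite /nS. exact: (nr_ge0 Hnorm (rep s)). Qed.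
Lemma nS_le s r : pi r = s -> nS s <= nr r. Proof. exact: rep_min. Qed.
Lemma nSD s t : nS (s + t) <= nS s + nS t.
Proof.
apply: le_trans (nrD Hnorm _ _); apply: nS_le. by rewrite rmorphD /= !repP.
Qed.
Lemma nSN s : nS (- s) = nS s.
Proof.
have h : forall u, nS (- u) <= nS u.
  move=> u; have h1 : pi (- rep u) = - u by rewrite rmorphN /= repP.
  by apply: le_trans (nS_le h1) _; rewrite (nrN Hnorm).
apply/eqP; rewrite eq_le h /=.
by have := h (- s); rewrite opprK.
Qed.
Lemma nSB s t : nS (s - t) <= nS s + nS t.
Proof. by apply: le_trans (nSD _ _) _; rewrite nSN. Qed.
Lemma rep0 : rep 0 = 0.
Proof.
apply: (nr_eq0 Hnorm); apply/eqP; rewrite eq_le nr_ge0 // andbT.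
by rewrite -(nr0 Hnorm); apply: rep_min; rewrite rmorph0.
Qed.
Lemma nS_eq0 s : nS s = 0 -> s = 0.
Proof. by move=> /(nr_eq0 Hnorm) h; rewrite -(repP s) h rmorph0. Qed.

Lemma conv_unique (u : nat -> M) L1 L2 :
  metric_converges d u L1 -> metric_converges d u L2 -> L1 = L2.
Proof.
move=> h1 h2; apply: (d_eq0 Hd); apply/eqP; rewrite eq_le d_ge0 // andbT.
apply/ler_addgt0Pr => e e0; rewrite add0r.
have [n1 hn1] := h1 (e / 2) (ltac:(lra)).
have [n2 hn2] := h2 (e / 2) (ltac:(lra)).
have := d_tri Hd L1 (u (maxn n1 n2)) L2.
have := hn1 _ (leq_maxl n1 n2); have := hn2 _ (leq_maxr n1 n2).
rewrite (dC Hd L1 (u (maxn n1 n2))); lra.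
Qed.

Lemma add_cont2 a b (e : real) : 0 < e -> exists2 del : real, 0 < del &
  forall a' b', d a a' < del -> d b b' < del -> d (a + b) (a' + b') < e.
Proof.
move=> e0; case: Htm => _ hadd _ _.
have hb : [set z | d (a + b) z < e] (a + b) by rewrite /= (dxx Hd).
have [U [V [oU oV Ua Vb h]]] := hadd a b _ (ball_open Hd Hop (a + b) e) hb.
have [d1 d10 h1] := open_ball Hop oU Ua.
have [d2 d20 h2] := open_ball Hop oV Vb.
exists (Num.min d1 d2); first by rewrite lt_min d10 d20.
move=> a' b' ha hb'; apply: h; [apply: h1 | apply: h2]; apply: lt_le_trans; eauto;
  by rewrite ge_min lexx ?orbT.
Qed.

Lemma conv_add (u v : nat -> M) L1 L2 : metric_converges d u L1 -> metric_converges d v L2 ->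
  metric_converges d (fun n => u n + v n) (L1 + L2).
Proof.
move=> h1 h2 e e0; have [del d0 hdel] := add_cont2 L1 L2 e0.
have [n1 hn1] := h1 del d0; have [n2 hn2] := h2 del d0.
exists (maxn n1 n2) => n hn; rewrite (dC Hd); apply: hdel; rewrite (dC Hd).
  by apply: hn1; apply: leq_trans hn; apply: leq_maxl.
by apply: hn2; apply: leq_trans hn; apply: leq_maxr.
Qed.

Lemma conv_scale (u : nat -> M) L r : metric_converges d u L ->
  metric_converges d (fun n => r *: u n) (r *: L).
Proof.
move=> h e e0; have [del d0 hdel] := aff_cont Hd Hop Htm 0 r L e0.
have [n hn] := h del d0; exists n => k hk; rewrite (dC Hd).
have := hdel (u k); rewrite !add0r; apply; rewrite (dC Hd); exact: hn.
Qed.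

Lemma tail (Pq : nat -> M) m (eta : real) : 0 <= eta ->
  (forall k, (m <= k)%N -> d (Pq k) (Pq k.+1) <= eta / 2 ^+ k.+1) ->
  exists L, metric_converges d Pq L /\ (forall i, (m <= i)%N -> d (Pq i) L <= eta / 2 ^+ i).
Proof.
move=> e0 h.
have half : forall k, eta / 2 ^+ k.+1 = eta / 2 ^+ k / 2.
  by move=> k; rewrite exprSr invfM mulrA.
have chain : forall i j, (m <= i)%N ->
    d (Pq i) (Pq (i + j)%N) <= eta / 2 ^+ i - eta / 2 ^+ (i + j)%N.
  move=> i; elim=> [|j IH] hi; first by rewrite addn0 (dxx Hd) subrr.
  have := d_tri Hd (Pq i) (Pq (i + j)%N) (Pq (i + j).+1).
  have := h (i + j)%N (leq_trans hi (leq_addr _ _)).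
  have := IH hi.
  rewrite addnS half.
  move: (eta / 2 ^+ i) (eta / 2 ^+ (i + j)%N) => a b; lra.
have bnd : forall i j, (m <= i)%N -> d (Pq i) (Pq (i + j)%N) <= eta / 2 ^+ i.
  move=> i j hi; have := chain i j hi.
  have : 0 <= eta / 2 ^+ (i + j)%N by apply: divr_ge0 => //; apply: exprn_ge0.
  move: (eta / 2 ^+ i) (eta / 2 ^+ (i + j)%N) => a b; lra.
have cauchy : metric_cauchy d Pq.
  move=> e ep; have [n hn] := pow_small e0 (ltac:(lra) : 0 < e / 2).
  exists (maxn m n) => p q hp hq.
  have hm : (m <= maxn m n)%N by apply: leq_maxl.
  have h1 := bnd _ (p - maxn m n)%N hm; rewrite subnKC // in h1.
  have h2 := bnd _ (q - maxn m n)%N hm; rewrite subnKC // in h2.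
  have h3 := pow_mono e0 (leq_maxr m n).
  have := d_tri Hd (Pq p) (Pq (maxn m n)) (Pq q).
  rewrite (dC Hd (Pq p) (Pq (maxn m n))).
  move: h1 h2 h3 hn; move: (eta / 2 ^+ maxn m n) (eta / 2 ^+ n) => a b; lra.
have [L hL] := Hcomp cauchy.
exists L; split => // i hi; apply: (conv_le Hd hL (m := i)) => n hn.
by have := bnd i (n - i)%N hi; rewrite subnKC.
Qed.

Local Notation N := (Ann M I).

Definition cS (a : nat -> S) : nat -> R := fun k => rep (a k).
Definition Pa (a : nat -> S) (n : nat) : M := Pf (cS a) x n.
Definition fL (a : nat -> S) : M :=
  if pselect (exists L, metric_converges d (Pa a) L) is left e then projT1 (cid e) else 0.

Lemma fL_eq a L : metric_converges d (Pa a) L -> fL a = L.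
Proof.
move=> h; rewrite /fL; case: pselect => [e|ne]; last by exfalso; apply: ne; exists L.
exact: conv_unique (projT2 (cid e)) h.
Qed.

Definition bndd (a : nat -> S) := exists B : nat, forall k, nS (a k) <= B%:R * (k`!)%:R.

Lemma Nx k : N (x k). Proof. by have [] := HG k. Qed.

Lemma G1' n c : bnd nr c n.+1 n -> d (Pf c x n) (Pf c x n.+1) < eps dl n.
Proof. by move=> h; have [_ G1 _ _ _] := HG n; rewrite Pf_S; apply: G1. Qed.

Lemma bnd_of a (B : nat) k : (forall k, nS (a k) <= B%:R * (k`!)%:R) -> (B <= k.+1)%N ->
  bnd nr (cS a) k.+1 k.
Proof.
move=> hB Bk i _; apply: le_trans (hB i) _; apply: ler_wpM2r; first by rewrite ler0n.
by rewrite ler_nat.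
Qed.

Lemma eps_le k : eps dl k <= 1 / 2 ^+ k.+1.
Proof.
rewrite /eps; apply: ler_wpM2r; first by rewrite invr_ge0 exprn_ge0.
exact: gam_le1.
Qed.

Lemma conv_bndd a : bndd a -> metric_converges d (Pa a) (fL a).
Proof.
move=> [B hB].
have [L [hL _]] := tail (Pq := Pa a) (m := B) (eta := 1) ler01 (fun k hk =>
  ltW (lt_le_trans (G1' (bnd_of hB (leqW hk))) (eps_le k))).
by rewrite (fL_eq hL).
Qed.

Lemma kill k u v : pi u = pi v -> u *: x k = v *: x k.
Proof.
move=> /rqpi_eq h; apply/eqP; rewrite -subr_eq0 -scalerBl; apply/eqP; exact: Nx.
Qed.

Lemma Pa_add a b n : Pa (fun k => a k + b k) n = Pa a n + Pa b n.
Proof.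
rewrite /Pa /Pf -big_split; apply: eq_bigr => i _ /=; rewrite -scalerDl; apply: kill.
by rewrite /cS rmorphD /= !repP.
Qed.

Lemma Pa_scale a r n : Pa (fun k => pi r * a k) n = r *: Pa a n.
Proof.
rewrite /Pa /Pf scaler_sumr; apply: eq_bigr => i _ /=; rewrite scalerA; apply: kill.
by rewrite /cS rmorphM /= !repP.
Qed.

Lemma fL_add a b : bndd a -> bndd b -> fL (fun k => a k + b k) = fL a + fL b.
Proof.
move=> ha hb; apply: fL_eq.
have -> : Pa (fun k => a k + b k) = (fun n => Pa a n + Pa b n).
  by apply: funext => n; apply: Pa_add.
exact: conv_add (conv_bndd ha) (conv_bndd hb).
Qed.

Lemma fL_scale a r : bndd a -> fL (fun k => pi r * a k) = r *: fL a.
Proof.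
move=> ha; apply: fL_eq.
have -> : Pa (fun k => pi r * a k) = (fun n => r *: Pa a n).
  by apply: funext => n; apply: Pa_scale.
exact: conv_scale (conv_bndd ha).
Qed.

Lemma bndd_sub a b : bndd a -> bndd b -> bndd (fun k => a k - b k).
Proof.
move=> [A hA] [B hB]; exists (A + B)%N => k; apply: le_trans (nSB _ _) _.
by rewrite natrD mulrDl lerD.
Qed.

Lemma small_div (a : real) n : 0 < a -> a / 2 ^+ n.+1 < a.
Proof.
move=> a0; rewrite ltr_pdivrMr ?exprn_gt0 //.
have : (1 : real) < 2 ^+ n.+1 by rewrite exprn_egt1 // ltr1n.
move: (2 ^+ n.+1 : real) => z; nra.
Qed.

Lemma fL_inj0 c : bndd c -> fL c = 0 -> forall k, c k = 0.
Proof.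
move=> [B hB] h0 j; apply: contrapT => hj.
pose K := maxn B j.
have hb : bnd nr (cS c) K.+1 K by apply: bnd_of hB _; apply: leqW; apply: leq_maxl.
have hI : ~ I (cS c j).
  move=> hI; apply: hj; rewrite -(repP (c j)).
  have : pi (rep (c j)) = pi 0 by apply/rqpi_eq; rewrite subr0.
  by rewrite rmorph0.
have [_ _ _ dpos G4] := HG K.
have hge := G4 (cS c) hb (ex_intro2 _ _ j (leq_maxr B j) hI).
rewrite -Pf_S in hge.
have step : forall k, (K.+1 <= k)%N -> d (Pa c k) (Pa c k.+1) <= dl K / 2 ^+ k.+1.
  move=> k hk.
  have hbk : bnd nr (cS c) k.+1 k.
    apply: bnd_of hB _; apply: leq_trans (leq_maxl B j) _; apply: leqW; exact: ltnW.
  apply: ltW; apply: lt_le_trans (G1' hbk) _.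
  rewrite /eps; apply: ler_wpM2r; first by rewrite invr_ge0 exprn_ge0.
  exact: gam_le.
have [L [hL hLb]] := tail (Pq := Pa c) (m := K.+1) (eta := dl K) (ltW dpos) step.
have L0 : L = 0 by rewrite -(fL_eq hL).
have := hLb K.+1 (leqnn _); rewrite L0 (dC Hd).
have := small_div K dpos.
rewrite /Pa in hge *; lra.
Qed.

Lemma in_l1_bndd a : in_l1 nS a -> bndd a.
Proof.
move=> ha.
have u0 : forall k, 0 <= nS (a k) / (k`!)%:R by move=> k; apply: divr_ge0 => //; exact: nS_ge0.
have hle := term_le_lim u0 ha.
set Lm := limn _ in hle.
have Lm0 : 0 <= Lm by apply: le_trans (hle 0%N).
have [B hB] : exists B : nat, Lm < B%:R by exists (Num.Def.archi_bound Lm); apply: archi_boundP.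
exists B => k.
have fk : (0 : real) < (k`!)%:R by rewrite ltr0n fact_gt0.
have := hle k; rewrite ler_pdivrMr //.
move=> h; apply: le_trans h _; apply: ler_wpM2r; [exact: ltW | exact: ltW].
Qed.

Lemma l1_term a b k : in_l1 nS a -> in_l1 nS b ->
  nS (a k - b k) / (k`!)%:R <= l1_dist nS a b.
Proof.
move=> ha hb.
have u0 : forall k, 0 <= nS (a k - b k) / (k`!)%:R.
  by move=> i; apply: divr_ge0 => //; exact: nS_ge0.
apply: term_le_lim => //.
apply: (series_le_cvg u0 _ _ (is_cvg_seriesD ha hb)) => i /=.
  by apply: addr_ge0; apply: divr_ge0 => //; exact: nS_ge0.
by rewrite -mulrDl; apply: ler_wpM2r; [rewrite invr_ge0 ler0n | exact: nSB].
Qed.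

Lemma fL_cont a W : in_l1 nS a -> op W -> W (fL a) ->
  exists2 e : real, 0 < e & forall b, in_l1 nS b -> l1_dist nS a b < e -> W (fL b).
Proof.
move=> ha oW Wa.
have [rho r0 hrho] := open_add Hd Hop Htm oW Wa.
have [K hK] := pow_small ler01 r0.
have [th th0 hth] := disc_min Hnorm Hdisc.
have m10 : 0 < Num.min th 1 by rewrite lt_min th0 ltr01.
have m1le : Num.min th 1 <= 1 by rewrite ge_min lexx orbT.
have m1th : Num.min th 1 <= th by rewrite ge_min lexx.
have fK : (0 : real) < (K`!)%:R by rewrite ltr0n fact_gt0.
have fK1 : (1 : real) <= (K`!)%:R by rewrite ler1n fact_gt0.
exists (Num.min th 1 / (K`!)%:R); first by apply: divr_gt0.
move=> b hb hab.
pose c := fun k => b k - a k.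
have hc : forall k, nS (c k) < Num.min th 1 / (K`!)%:R * (k`!)%:R.
  move=> k; have fk : (0 : real) < (k`!)%:R by rewrite ltr0n fact_gt0.
  rewrite -ltr_pdivrMr //; rewrite /c -opprB nSN.
  exact: le_lt_trans (l1_term k ha hb) hab.
have hdiv : Num.min th 1 / (K`!)%:R <= 1 by rewrite ler_pdivrMr // mul1r; apply: le_trans fK1.
have hc1 : forall k, nS (c k) <= 1%:R * (k`!)%:R.
  move=> k; have := hc k; have : (0 : real) < (k`!)%:R by rewrite ltr0n fact_gt0.
  move: hdiv; rewrite mul1r; move: (Num.min th 1 / (K`!)%:R) ((k`!)%:R : real) => u v.
  have := nS_ge0 (c k); nra.
have c0 : forall k, (k <= K)%N -> cS c k = 0.
  move=> k hk; apply: hth; change (nS (c k) < th); apply: lt_le_trans (hc k) _.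
  have hkK : ((k`!)%:R : real) <= (K`!)%:R by rewrite ler_nat leq_fact.
  apply: le_trans m1th; apply: le_trans (ler_wpM2l _ hkK) _.
    exact: ltW (divr_gt0 m10 fK).
  by rewrite divfK ?gt_eqF.
have P0 : Pa c K.+1 = 0.
  rewrite /Pa /Pf big1 // => i _; rewrite c0 ?scale0r //; rewrite -ltnS; exact: ltn_ord.
have hbc : bndd c by exists 1%N.
have step : forall k, (K.+1 <= k)%N -> d (Pa c k) (Pa c k.+1) <= 1 / 2 ^+ k.+1.
  move=> k hk; apply: ltW; apply: lt_le_trans (eps_le k).
  apply: G1'; apply: bnd_of hc1 _; by [].
have [L [hL hLb]] := tail (Pq := Pa c) (m := K.+1) (eta := 1) ler01 step.
have hd := hLb K.+1 (leqnn _); rewrite P0 in hd.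
have fc : fL c = L := fL_eq hL.
have fc' : fL (fun k => c k) = L := fL_eq hL.
have hb_eq : b = (fun k => a k + c k) by apply: funext => k; rewrite /c addrC subrK.
rewrite hb_eq (fL_add (in_l1_bndd ha) hbc) ?fc ?fc'.
apply: hrho; apply: le_lt_trans hd _; apply: le_lt_trans hK.
exact: pow_mono ler01 (leqnSn K).

Qed.

Lemma embed : l1_embedding op pi nS fL.
Proof.
split.
- move=> a b ha hb; exact: fL_add (in_l1_bndd ha) (in_l1_bndd hb).
- move=> r a ha; exact: fL_scale r (in_l1_bndd ha).
- move=> a b ha hb e.
  have hc := bndd_sub (in_l1_bndd ha) (in_l1_bndd hb).
  have ha_eq : a = (fun k => b k + (a k - b k)) by apply: funext => k; rewrite addrC subrK.
  have h0 : fL (fun k => a k - b k) = 0.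
    have h := e; rewrite {1}ha_eq (fL_add (in_l1_bndd hb) hc) in h.
    by apply: (addrI (fL b)); rewrite addr0.
  have := fL_inj0 hc h0 => h; apply: funext => k; apply/eqP; rewrite -subr_eq0; apply/eqP; exact: h.
- move=> a W ha oW Wa; exact: fL_cont.
Qed.

Lemma embeds : l1_quotient_embeds nr op.
Proof.
exists (RQ J), (rqpi J), nS, fL; split; [exact: rqpi_surj | exact: qnorm | exact: embed].
Qed.

End Final.


Lemma no_inj_bool (g : (nat -> bool) -> nat) : ~ injective g.
Proof.
move=> ig.
pose h n : nat -> bool := if pselect (exists t, g t = n) is left e then projT1 (cid e)
  else (fun _ => false).
pose t0 k := ~~ h k k.
have ht : h (g t0) = t0.
  rewrite /h; case: pselect => [e|ne]; last by exfalso; apply: ne; exists t0.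
  by apply: ig; exact: projT2 (cid e).
have e := congr1 (fun t => t (g t0)) ht; simpl in e.
have e2 : t0 (g t0) = ~~ h (g t0) (g t0) by [].
move: e; rewrite e2; by case: (h (g t0) (g t0)).
Qed.

Lemma excl (R : pzRingType) (nr : R -> real) (M : lmodType R) (op : set (set M)) :
  is_ring_norm nr -> countable [set: M] -> ~ l1_quotient_embeds nr op.
Proof.
move=> Hnorm cM [S [pi [nS [f [surj qn [fadd fsc finj fcont]]]]]].
have [hM ihM] := countable_injP _ cM.
have nS0 : forall s, 0 <= nS s.
  move=> s; have [r <-] := surj s; have [[s' [_ ->]] _] := qn r; exact: nr_ge0 Hnorm s'.
pose a (t : nat -> bool) : nat -> S := fun k => if t k then 1 else 0.
pose C := nS 1 + nS 0.
have hl1 : forall t, in_l1 nS (a t).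
  move=> t; rewrite /in_l1.
  have hv := is_cvg_seriesZ (k := C) (is_cvg_series_exp_coeff (1 : real)).
  apply: (series_le_cvg _ _ _ hv) => k.
  - by apply: divr_ge0 => //.
  - change (0 <= C * exp_coeff 1 k); rewrite exp_coeffE /= expr1n mulr1.
    by apply: mulr_ge0; [rewrite addr_ge0 | rewrite invr_ge0].
  - change (nS (a t k) / (k`!)%:R <= C * exp_coeff 1 k); rewrite exp_coeffE /= expr1n mulr1.
    apply: ler_wpM2r; first by rewrite invr_ge0.
    by rewrite /a /C; case: (t k); rewrite ?lerDl ?lerDr.
apply: (@no_inj_bool (fun t => hM (f (a t)))) => t t' e.
have e1 : f (a t) = f (a t') by apply: ihM => //; rewrite inE.
have e2 := finj _ _ (hl1 t) (hl1 t') e1.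
apply: funext => k; have := congr1 (fun u => u k) e2; rewrite /a.
by case: (t k); case: (t' k) => //= /eqP; rewrite ?oner_eq0 // eq_sym oner_eq0.
Qed.

Theorem theorem1p2 (R : pzRingType) (nr : R -> real) (M : lmodType R)
    (op : set (set M)) :
  is_ring_norm nr -> left_noetherian R -> discrete_norm nr -> proper_norm nr ->
  polish_module nr op ->
  exactly_one (countable [set: M]) (l1_quotient_embeds nr op).
Proof.
move=> Hnorm Hnoeth Hdisc Hprop [Htm [Htop [D [HDc HDd]] [d [Hd Hop Hcomp]]]].
split; last by move=> [cM emb]; exact: excl Hnorm cM emb.
case: (pselect (countable [set: M])) => cM; [by left | right].
have [I [HI HIu HImax]] := max_ideal Hnoeth cM.
have I1 : ~ I 1.
  move=> I1; apply: HIu; apply: (@sub_countable _ _ _ [set (0 : M)]); last exact: countable1.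
  apply: subset_card_le => y hy; have := hy 1 I1; rewrite scale1r => -> //.
case: HI => [[I0 IB IMl] IMr].
pose J := @MkPIdeal R I I0 IB IMl (fun r x h => IMr x r h) I1.
have HI : tideal (pI J) by split.
have [x [dl HG]] := seq_exists Hd Hop Htm Hcomp Hnoeth Hnorm Hdisc Hprop HDc HDd HI HIu HImax.
exact: (embeds Hd Hop Htm Hcomp Hnorm Hdisc Hprop HG).
Qed.
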